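(* Let $G$ be a finite abelian group, $k\ge d+1\ge2$ integers, and let $V_0=\{(0,1),\dots,(0,k)\}$ and $I=\{\iota_1,\dots,\iota_{d+1}\}$ be disjoint index sets. For $\omega\in\{0,1\}^{d+1}\setminus\{0\}$ let $\phi_\omega:G^{V_0\cup I}\to G$ be the linear form $$\phi_\omega(\mathbf{x})=\sum_{i=1}^{d+1}\big((1-\omega_i)x_{(0,i)}+\omega_i x_{\iota_i}\big)+\sum_{i=d+2}^{k}x_{(0,i)},$$ and let $\Phi_1=\{\phi_\omega:\omega\in\{0,1\}^{d+1}\setminus\{0\}\}$. Then for every $f:G\to[-1,1]$, $$\|f\|_{\square(\Phi_1)}\ge\|f\|_{U^{d+1}}^{2^{d+1}}.$$
   Context: For a linear system $\Phi$ of linear forms $G^{W}\to G$ with $0/1$ coefficients (each determined by its support $\mathrm{supp}(\phi)\subseteq W$ via $\phi(\mathbf{x})=\sum_{v\in\mathrm{supp}(\phi)}x_v$), let $V(\Phi)=V_0\cup\bigcup_{\phi\in\Phi}\mathrm{supp}(\phi)$ and define, for $f:G\to\mathbb{R}$, $$\|f\|_{\square(\Phi)}=\max_{u_\phi:G\to[-1,1]\ (\phi\in\Phi)}\mathbb{E}_{\mathbf{x}\in G^{V(\Phi)}}\Big[f\Big(\sum_{v\in V_0}x_v\Big)\prod_{\phi\in\Phi}u_\phi(\phi(\mathbf{x}))\Big].$$ $\|f\|_{U^{m}}=\big(\mathbb{E}_{x,h_1,\dots,h_m\in G}\prod_{\omega\in\{0,1\}^m}f(x+\sum_i\omega_ih_i)\big)^{1/2^m}$.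 *)

(* Defs.v *)
From HB Require Import structures.
From mathcomp Require Import all_boot all_order all_algebra.
From mathcomp Require Import all_classical all_reals all_analysis.
Set Implicit Arguments. Unset Strict Implicit. Unset Printing Implicit Defensive.
Import Order.TTheory GRing.Theory Num.Theory.
Local Open Scope ring_scope.
Local Open Scope classical_set_scope.

Definition Efin (R : realType) (T : finType) (F : T -> R) : R :=
  (#|T|%:R)^-1 * \sum_(t : T) F t.

(* Linear system of 0/1 forms: variables W, distinguished set V0, forms
   indexed by P, each determined by its support supp p : {set W}.
   ||f||_{box(Phi)} = max over u_phi : G -> [-1,1] of
   E_x f(sum_{v in V0} x_v) prod_phi u_phi(phi(x)).
   The max (attained: compact domain, continuous expression) is written as
   the supremum of the set of attained values. *)
Definition box_value (R : realType) (G : finZmodType) (W P : finType)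
  (V0 : {set W}) (supp : P -> {set W}) (f : G -> R) (u : P -> G -> R) : R :=
  Efin (fun x : {ffun W -> G} =>
    f (\sum_(v in V0) x v) * \prod_(p : P) u p (\sum_(v in supp p) x v)).

Definition box_norm (R : realType) (G : finZmodType) (W P : finType)
  (V0 : {set W}) (supp : P -> {set W}) (f : G -> R) : R :=
  sup [set r : R | exists u : P -> G -> R,
        (forall p g, -1 <= u p g <= 1) /\ r = box_value V0 supp f u].

Definition gowers_norm (R : realType) (G : finZmodType) (m : nat) (f : G -> R) : R :=
  powR (Efin (fun xh : G * {ffun 'I_m -> G} =>
     \prod_(w : {ffun 'I_m -> bool})
        f (xh.1 + \sum_(i < m) (if w i then xh.2 i else 0))))
       ((2 ^ m)%:R)^-1.

(* The system Phi_1.  Variables: inl i  <->  (0, i+1)  (i < k),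
                                 inr j  <->  iota_(j+1) (j < d+1). *)
Definition Phi1_V0 (k d : nat) : {set 'I_k + 'I_d.+1} :=
  [set v : 'I_k + 'I_d.+1 | if v is inl _ then true else false].

Definition Phi1_index (d : nat) : finType :=
  {w : {ffun 'I_d.+1 -> bool} | w != [ffun => false]}.

Definition Phi1_supp (k d : nat) (w : Phi1_index d) : {set 'I_k + 'I_d.+1} :=
  [set v : 'I_k + 'I_d.+1 | match v with
           | inl i => if (nat_of_ord i < d.+1)%N then ~~ val w (inord (nat_of_ord i)) else true
           | inr j => val w j
           end].

(* Main.v *)
Require Import Defs.
From HB Require Import structures.
From mathcomp Require Import all_boot all_order all_algebra.
From mathcomp Require Import all_classical all_reals all_analysis.
Import Order.TTheory GRing.Theory Num.Theory.
Local Open Scope ring_scope.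

Set Implicit Arguments. Unset Strict Implicit.

Lemma card_pos (T : finType) (x : T) : (0 < #|T|)%N.
Proof. by apply/card_gt0P; exists x. Qed.

Lemma Efin_push (R : realType) (X Y : finType) (aX : X -> X -> X)
  (aY : Y -> Y -> Y) (T : X -> Y) (K : Y -> R) (x0 : X) :
  (forall z, injective (aX^~ z)) -> (forall c, injective (aY c)) ->
  (forall x z, T (aX x z) = aY (T x) (T z)) -> (forall p, exists z, T z = p) ->
  Efin (fun x => K (T x)) = Efin K.
Proof.
move=> injX injY hom surj.
have key p : \sum_x K (T x) = \sum_x K (aY (T x) p).
  have [z <-] := surj p.
  rewrite (reindex_inj (injX z)) /=; apply: eq_bigr => x _; by rewrite hom.
have E : #|Y|%:R * \sum_x K (T x) = #|X|%:R * \sum_p K p :> R.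
  transitivity (\sum_(p : Y) \sum_x K (aY (T x) p)).
    transitivity (\sum_(p : Y) \sum_x K (T x)).
      by rewrite sumr_const mulr_natl; congr (_ *+ _); apply: eq_card.
    by apply: eq_bigr => p _; exact: key.
  rewrite exchange_big /=.
  rewrite (eq_bigr (fun _ => \sum_p K p)); last first.
    by move=> x _; rewrite [RHS](reindex_inj (injY (T x))).
  by rewrite sumr_const mulr_natl; congr (_ *+ _); apply: eq_card.
have hX : #|X|%:R != 0 :> R by rewrite pnatr_eq0 -lt0n (card_pos x0).
have hY : #|Y|%:R != 0 :> R by rewrite pnatr_eq0 -lt0n (card_pos (T x0)).
rewrite /Efin.
have -> : \sum_x K (T x) = (#|Y|%:R)^-1 * (#|X|%:R * \sum_p K p).
  by rewrite -E mulKf.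
by rewrite mulrCA mulKf.
Qed.

Definition Kfun (R : realType) (G : finZmodType) (m : nat) (f : G -> R)
  (p : G * {ffun 'I_m -> G}) : R :=
  \prod_(w : {ffun 'I_m -> bool}) f (p.1 + \sum_(i < m) (if w i then p.2 i else 0)).

Definition Pfun (R : realType) (G : finZmodType) (n : nat) (f : G -> R)
  (y : G) (h : {ffun 'I_n.+1 -> G}) : R :=
  \prod_(w : {ffun 'I_n.+1 -> bool} | ~~ w ord0)
     f (y + \sum_(i < n.+1) (if w i then h i else 0)).

Definition flipw (n : nat) (w : {ffun 'I_n.+1 -> bool}) : {ffun 'I_n.+1 -> bool} :=
  [ffun i => if i == ord0 then ~~ w i else w i].

Lemma flipwK n : involutive (@flipw n).
Proof. by move=> w; apply/ffunP => i; rewrite !ffunE; case: eqP => _ //; rewrite negbK. Qed.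

Lemma Ksplit (R : realType) (G : finZmodType) (n : nat) (f : G -> R) y (h : {ffun 'I_n.+1 -> G}) :
  Kfun f (y, h) = Pfun f y h * Pfun f (y + h ord0) h.
Proof.
rewrite /Kfun /Pfun (bigID (fun w : {ffun 'I_n.+1 -> bool} => w ord0)) /= mulrC.
congr (_ * _).
rewrite (reindex_inj (can_inj (@flipwK n))) /=.
apply: eq_big => [w|w hw]; first by rewrite /flipw ffunE eqxx.
have {hw} hw : ~~ w ord0 by move: hw; rewrite /flipw ffunE eqxx.
rewrite (bigD1 ord0) //= [in RHS](bigD1 ord0) //= /flipw !ffunE eqxx (negbTE hw) /=.
rewrite add0r addrA; congr (f (_ + _)); apply: eq_bigr => i hi.
by rewrite ffunE (negbTE hi).
Qed.

Lemma Pind (R : realType) (G : finZmodType) (n : nat) (f : G -> R) y (h h' : {ffun 'I_n.+1 -> G}) :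
  (forall i, i != ord0 -> h i = h' i) -> Pfun f y h = Pfun f y h'.
Proof.
move=> H; apply: eq_bigr => w hw; congr (f (_ + _)).
rewrite (bigD1 ord0) //= [in RHS](bigD1 ord0) //= (negbTE hw) !add0r.
by apply: eq_bigr => i hi; rewrite H.
Qed.

Lemma K_nonneg (R : realType) (G : finZmodType) (n : nat) (f : G -> R) :
  0 <= Efin (Kfun (m:=n.+1) f).
Proof.
pose X3 := ((G * G) * {ffun 'I_n.+1 -> G})%type.
pose aX3 (a b : X3) : X3 := ((a.1.1 + b.1.1, a.1.2 + b.1.2), [ffun i => a.2 i + b.2 i]).
pose Y := (G * {ffun 'I_n.+1 -> G})%type.
pose aY (p q : Y) : Y := (p.1 + q.1, [ffun i => p.2 i + q.2 i]).
pose T3 (t : X3) : Y := (t.1.1, [ffun i => if i == ord0 then t.1.2 - t.1.1 else t.2 i]).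
rewrite -(@Efin_push R X3 Y aX3 aY T3 _ ((0, 0), [ffun => 0])).
- rewrite /Efin; apply: mulr_ge0; first by rewrite invr_ge0 ler0n.
  have -> : \sum_(t : X3) Kfun f (T3 t) =
            \sum_(t : X3) Pfun f t.1.1 t.2 * Pfun f t.1.2 t.2.
    apply: eq_bigr => -[[y y'] h] _; rewrite /T3 /= Ksplit /= ffunE eqxx.
    rewrite (addrC y (y' - y)) subrK.
    by congr (_ * _); apply: Pind => i hi; rewrite ffunE (negbTE hi).
  rewrite -(pair_bigA _ (fun a b => Pfun f a.1 b * Pfun f a.2 b)) /=.
  rewrite exchange_big /=; apply: sumr_ge0 => h _.
  rewrite -(pair_bigA _ (fun a b => Pfun f a h * Pfun f b h)) /=.
  rewrite (eq_bigr (fun i => Pfun f i h * \sum_j Pfun f j h)); last by move=> i _; rewrite big_distrr.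
  rewrite -big_distrl /= -expr2; exact: sqr_ge0.
- move=> z a b /= [e1 e2 /ffunP e3]; move: a b e1 e2 e3 => [[a1 a2] a3] [[b1 b2] b3] /= e1 e2 e3.
  congr ((_, _), _); [exact: addIr e1 | exact: addIr e2 |].
  by apply/ffunP => i; have := e3 i; rewrite !ffunE => /addIr.
- move=> c [a1 a2] [b1 b2] /= [e1 /ffunP e2]; congr (_, _); first exact: addrI e1.
  by apply/ffunP => i; have := e2 i; rewrite !ffunE => /addrI.
- move=> [[x1 x2] x3] [[z1 z2] z3]; rewrite /T3 /aX3 /aY /=; congr (_, _).
  apply/ffunP => i; rewrite !ffunE; case: eqP => _ //.
  by rewrite opprD addrACA.
- move=> [y h]; exists ((y, y + h ord0), h); rewrite /T3 /=; congr (_, _).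
  apply/ffunP => i; rewrite ffunE; case: eqP => [->|] //.
  by rewrite addrC addKr.
Qed.

Lemma sum_supp (G : finZmodType) (k d : nat) (hk : (d <= k)%N)
  (x : {ffun 'I_k.+1 + 'I_d.+1 -> G}) (w : Phi1_index d) :
  \sum_(v in Phi1_supp k.+1 w) x v =
  \sum_(v in Phi1_V0 k.+1 d) x v +
  \sum_(i < d.+1) (if val w i then x (inr i) - x (inl (inord i)) else 0).
Proof.
rewrite (eq_bigl (fun v => match v with
           | inl i => if (nat_of_ord i < d.+1)%N then ~~ val w (inord (nat_of_ord i)) else true
           | inr j => val w j
           end)); last by move=> v; rewrite /Phi1_supp inE.
move: (val w) => {}w.
rewrite big_sumType /= big_mkcond /= [X in _ = X + _]big_mkcond big_sumType /=.
rewrite [X in _ = _ + X + _]big1; last by move=> j _; rewrite inE.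
rewrite addr0.
have -> : \sum_(i < d.+1) (if w i then x (inr i) - x (inl (inord i)) else 0) =
   \sum_(i < d.+1 | w i) x (inr i) -
   \sum_(i < d.+1) (if (i < d.+1)%N && w (inord i) then x (inl (inord i)) else 0).
  rewrite [X in _ = X - _]big_mkcond /= -sumrB; apply: eq_bigr => i _.
  by rewrite ltn_ord inord_val; case: (w i); rewrite ?subr0.
rewrite (big_ord_widen k.+1 (fun i => if (i < d.+1)%N && w (inord i) then x (inl (inord i)) else 0)) //.
rewrite [RHS]addrCA [LHS]addrC; congr (_ + _).
apply/eqP; rewrite eq_sym subr_eq [X in _ + X]big_mkcond -big_split /=; apply/eqP; apply: eq_bigr => i _.
rewrite /Phi1_V0 inE inord_val.
case: (i < d.+1)%N => /=; last by rewrite addr0.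
by case: (w (inord i)); rewrite /= ?add0r ?addr0.
Qed.

Lemma box_value_le1 (R : realType) (G : finZmodType) (W P : finType)
  (V0 : {set W}) (supp : P -> {set W}) (f : G -> R) (u : P -> G -> R) :
  (forall g, -1 <= f g <= 1) -> (forall p g, -1 <= u p g <= 1) ->
  box_value V0 supp f u <= 1.
Proof.
move=> hf hu; rewrite /box_value /Efin.
have hX : (0 < #|{ffun W -> G}|)%N by apply: (card_pos [ffun => 0]).
apply: (@le_trans _ _ ((#|{ffun W -> G}|%:R)^-1 * \sum_(x : {ffun W -> G}) 1)).
  apply: ler_wpM2l; first by rewrite invr_ge0 ler0n.
  apply: ler_sum => x _; apply: le_trans (ler_norm _) _.
  rewrite normrM normr_prod; apply: mulr_ile1 => //.
  - by apply: prodr_ge0 => p _.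
  - by rewrite ler_norml hf.
  - by apply: prodr_ile1 => p _; rewrite normr_ge0 /= ler_norml hu.
rewrite sumr_const -[1 *+ _]mulr_natl mulr1 mulVf // pnatr_eq0 -lt0n.
by apply: leq_trans hX _; apply: subset_leq_card.
Qed.

Unset Implicit Arguments. Set Strict Implicit.

Theorem mainTheorem7 (R : realType) (G : finZmodType) (k d : nat)
  (hd : (1 <= d)%N) (hk : (d.+1 <= k)%N) (f : G -> R)
  (hf : forall g, -1 <= f g <= 1) :
  box_norm (Phi1_V0 k d) (@Phi1_supp k d) f >= gowers_norm d.+1 f ^+ (2 ^ d.+1).
Proof.
case: k hk => [//|k] hk.
pose T (x : {ffun 'I_k.+1 + 'I_d.+1 -> G}) : G * {ffun 'I_d.+1 -> G} :=
  (\sum_(v in Phi1_V0 k.+1 d) x v, [ffun j => x (inr j) - x (inl (inord j))]).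
have hA : box_value (Phi1_V0 k.+1 d) (@Phi1_supp k.+1 d) f (fun _ => f) =
          Efin (Kfun (m:=d.+1) f).
  transitivity (Efin (fun x => Kfun (m:=d.+1) f (T x))).
    rewrite /box_value /Efin; congr (_ * _); apply: eq_bigr => x _.
    rewrite /Kfun (bigD1 [ffun => false]) //= [X in _ + X]big1 ?addr0; last by move=> i _; rewrite ffunE.
    congr (_ * _).
    rewrite [RHS](reindex_omap (val : Phi1_index d -> _) insub); last first.
      by move=> w hw; rewrite insubT.
    apply: eq_big => [p|p _]; first by rewrite valK eqxx (valP p).
    rewrite (@sum_supp G k d hk x p).
    by congr (f (_ + _)); apply: eq_bigr => i _; rewrite ffunE.
  pose aX (a b : {ffun 'I_k.+1 + 'I_d.+1 -> G}) := [ffun v => a v + b v].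
  pose aY (p q : G * {ffun 'I_d.+1 -> G}) := (p.1 + q.1, [ffun i => p.2 i + q.2 i]).
  apply: (@Efin_push R _ _ aX aY T _ [ffun => 0]).
  - move=> z a b /ffunP e; apply/ffunP => v; have := e v; rewrite !ffunE; exact: addIr.
  - move=> c [a1 a2] [b1 b2] /= [e1 /ffunP e2]; congr (_, _); first exact: addrI e1.
    by apply/ffunP => i; have := e2 i; rewrite !ffunE => /addrI.
  - move=> a b; rewrite /T /aX /aY /=; congr (_, _).
      by rewrite -big_split /=; apply: eq_bigr => v _; rewrite ffunE.
    by apply/ffunP => i; rewrite !ffunE opprD addrACA.
  - move=> [y h].
    exists [ffun v => match v with
                     | inl i => if i == ord0 then y else 0
                     | inr j => h j + (if inord j == ord0 :> 'I_k.+1 then y else 0) end].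
    rewrite /T; congr (_, _); last first.
      by apply/ffunP => j; rewrite !ffunE addrK.
    rewrite big_mkcond big_sumType /= [X in _ + X]big1 ?addr0; last first.
      by move=> j _; rewrite /Phi1_V0 inE.
    rewrite (bigD1 ord0) //= big1 ?addr0; last first.
      by move=> i hi; rewrite /Phi1_V0 inE ffunE (negbTE hi).
    by rewrite /Phi1_V0 inE ffunE eqxx.
have hub : ubound [set r : R | exists u : Phi1_index d -> G -> R,
        (forall p g, -1 <= u p g <= 1) /\ r = box_value (Phi1_V0 k.+1 d) (@Phi1_supp k.+1 d) f u] 1.
  by move=> r [u [hu ->]]; apply: box_value_le1.
have -> : gowers_norm d.+1 f = (Efin (Kfun (m:=d.+1) f)) `^ ((2 ^ d.+1)%:R)^-1 by [].
rewrite -powR_mulrn ?powR_ge0 // -powRrM mulVf ?pnatr_eq0 ?expn_eq0 //.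
rewrite powRr1 ?K_nonneg // -hA.
apply: (ub_le_sup (ex_intro _ 1 hub)).
by exists (fun _ => f); split.
Qed.
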